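(* Let $N>1$ be an integer and let data points $\{(x_n,y_n)\}_{n=0}^N\subset\mathbb{R}^2$ with $0=x_0<x_1<\dots<x_N=1$ be given. Let $a\in\mathbb{R}$ with $|a|<1$, and for $n=1,\dots,N$ let $g_n:[0,1]\to\mathbb{R}$ be continuous. Define $w_n(x,y)=(L_n(x),F_n(x,y))$ with $L_n(x)=\frac{x+n-1}{N}$ and $F_n(x,y)=ay+g_n(x)$, and assume $L_n(x_0)=x_{n-1}$, $L_n(x_N)=x_n$, $F_n(x_0,y_0)=y_{n-1}$, $F_n(x_N,y_N)=y_n$ for all $n=1,\dots,N$. Let $f^*:[0,1]\to\mathbb{R}$ be the continuous function that interpolates the data (i.e. $f^*(x_n)=y_n$) and whose graph is the attractor of the IFS $F=(\mathbb{R}^2;w_1,\dots,w_N)$. Define $g$ by $$g(x)=\begin{cases} g_n(L_n^{-1}(x)) & \text{if } x\in[x_{n-1},x_n),\ n=1,\dots,N,\\ g_N(1) & \text{if } x=1,\\ g(x-1) & \text{if } x\in(1,\infty).\end{cases}$$ Then $f^*$ is the unique solution of the functional equation $f(x)-af(Nx)=g(x)$ in the space $L^\infty(\mathbb{R})\cap L^2([0,1])\cap\mathcal{P}$.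
   Context: $\mathcal{P}$ denotes the set of functions on $\mathbb{R}$ of period $1$; $L^\infty(\mathbb{R})\cap L^2([0,1])\cap\mathcal{P}$ is the space of essentially bounded period-1 functions on $\mathbb{R}$ (square integrable on $[0,1]$), with functions identified when equal almost everywhere; $f^*$ and $g$ are regarded as elements of this space via their period-1 extensions, and uniqueness is up to equality almost everywhere. The attractor of an IFS $(\mathbb{R}^2;w_1,\dots,w_N)$ is the unique nonempty compact set $A$ with $A=\bigcup_{n=1}^N w_n(A)$; under the stated assumptions it exists and is the graph of a continuous function on $[0,1]$ interpolating the data. *)

(* Defs.v *)
From HB Require Import structures.
From mathcomp Require Import all_boot all_order all_algebra.
From mathcomp Require Import all_classical all_reals all_analysis.
Set Implicit Arguments. Unset Strict Implicit. Unset Printing Implicit Defensive.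
Import Order.TTheory GRing.Theory Num.Theory.
Import numFieldNormedType.Exports.
Local Open Scope classical_set_scope.
Local Open Scope ring_scope.

Section Defs.
Variable R : realType.

Definition per1 (h : R -> R) (x : R) : R := h (x - (Num.floor x)%:~R).

Definition graph01 (f : R -> R) : set (R * R) :=
  [set p | 0 <= p.1 <= 1 /\ p.2 = f p.1].

(* The attractor of the IFS (R^2; w_1,...,w_N): the nonempty compact set A
   with A = \bigcup_{n=1}^N w_n(A)  (unique under the contraction assumptions). *)
Definition is_attractor (N : nat) (w : nat -> R * R -> R * R) (A : set (R * R)) :=
  A !=set0 /\ compact A /\
  A = \bigcup_(n in [set k : nat | (1 <= k <= N)%N]) (w n @` A).

Definition in_space (f : R -> R) : Prop :=
  measurable_fun setT f /\
  (exists M : R, {ae (@lebesgue_measure R), forall x, `|f x| <= M}) /\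
  (@lebesgue_measure R).-integrable `[0, 1] (fun x => ((f x) ^+ 2)%:E) /\
  (forall x, f (x + 1) = f x).

(* The functional equation f(x) - a f(Nx) = g(x), in L^oo (i.e. a.e.). *)
Definition solves_fe (N : nat) (a : R) (g f : R -> R) : Prop :=
  {ae (@lebesgue_measure R), forall x, f x - a * f (N%:R * x) = g x}.

End Defs.

(* Main.v *)
Require Import Defs.
From HB Require Import structures.
From mathcomp Require Import all_boot all_order all_algebra.
From mathcomp Require Import all_classical all_reals all_analysis.
From mathcomp Require Import ring lra zify.
Import Order.TTheory GRing.Theory Num.Theory.
Import numFieldNormedType.Exports.
Local Open Scope classical_set_scope.
Local Open Scope ring_scope.

Section scale.
Context (R : realType) (k : R).
Definition scl (x : measurableTypeR R) : measurableTypeR R := k * x.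
Lemma mscl : measurable_fun setT scl.
Proof. apply: measurable_realfun.continuous_measurable_fun => x. exact: (@mulrl_continuous). Qed.
Definition pfs := pushforward (@lebesgue_measure R) scl.
Local Open Scope ereal_scope.
Let pfs0 : pfs set0 = 0.
Proof. by rewrite /pfs /pushforward preimage_set0 measure0. Qed.
Let pfs_ge0 A : 0 <= pfs A.
Proof. rewrite /pfs /pushforward. exact: measure_ge0. Qed.
Let pfs_sa : semi_sigma_additive pfs.
Proof.
move=> F mF tF mUF; rewrite /pfs /pushforward preimage_bigcup.
apply: measure_semi_sigma_additive.
- by move=> n; rewrite -[X in measurable X]setTI; exact: mscl.
- apply/trivIsetP => /= i j _ _ ij; rewrite -preimage_setI.
  by move/trivIsetP : tF => /(_ _ _ _ _ ij) ->//; rewrite preimage_set0.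
- by rewrite -preimage_bigcup -[X in measurable X]setTI; exact: mscl.
Qed.
HB.instance Definition _ := isMeasure.Build _ _ _ pfs pfs0 pfs_ge0 pfs_sa.
End scale.

Lemma scl_preimage_itv (R : realType) (k a b : R) : 0 < k ->
  @scl R k @^-1` `]a, b] = `]a / k, b / k]%classic.
Proof.
move=> k0; apply/seteqP; split => x /=; rewrite !in_itv /= /scl.
  by rewrite !ltr_pdivrMr // !ler_pdivlMr // ![x * k]mulrC.
by rewrite !ltr_pdivrMr // !ler_pdivlMr // ![x * k]mulrC.
Qed.

Lemma lebesgue_scl (R : realType) (k : R) (k0 : 0 < k) (A : set R) :
  measurable A ->
  lebesgue_measure A = mscale (NngNum (ltW k0)) (@pfs R k) A.
Proof.
move=> mA; apply: (lebesgue_measure_unique (mu := (mscale (NngNum (ltW k0)) (@pfs R k)))) => // X [[a b] _ <-] /=.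
rewrite /mscale /pfs /pushforward /=.
rewrite [X in (_ * X)%E]/pfs /pushforward (@scl_preimage_itv R k a b k0).
rewrite !lebesgue_measure_itv /= !lte_fin ltr_pM2r ?invr_gt0 //.
case: ifPn => ab; last by rewrite mule0.
by rewrite -EFinD -EFinM -mulrBl mulrCA divff ?gt_eqF // mulr1.
Qed.

Lemma ae_scl (R : realType) (k : R) (k0 : 0 < k) (P : R -> Prop) :
  {ae (@lebesgue_measure R), forall x, P x} ->
  {ae (@lebesgue_measure R), forall x, P (k * x)}.
Proof.
move=> [B [mB B0 PB]].
have mB' : measurable (@scl R k @^-1` B).
  by rewrite -[X in measurable X]setTI; apply: mscl.
exists (@scl R k @^-1` B); split => //.
  have := @lebesgue_scl R k k0 B mB; rewrite B0 /mscale /= => /esym/eqP.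
  rewrite mule_eq0 eqe gt_eqF //= => /eqP.
  by rewrite /pfs /pushforward.
by move=> x /= nP; apply: PB.
Qed.

Lemma frac01 (R : realType) (x : R) : 0 <= x - (Num.floor x)%:~R < 1.
Proof.
have := floor_le x; have := floorD1_gt x; rewrite intrD => h1 h2.
apply/andP; split; [by rewrite subr_ge0 | by rewrite ltrBlDl].
Qed.

Lemma per1_per (R : realType) (h : R -> R) x : per1 h (x + 1) = per1 h x.
Proof.
rewrite /per1 floorDrz ?intr_int ?floor1 ?intrD //.
by congr h; rewrite mulr1z; ring.
Qed.

Lemma per1_int (R : realType) (h : R -> R) (z : int) x :
  z%:~R <= x < z%:~R + 1 -> per1 h x = h (x - z%:~R).
Proof. by move=> hx; rewrite /per1 (floor_def (m := z)) // intrD. Qed.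

Lemma per1_mfun_int (R : realType) (h : R -> R) (z : int) :
  {within `[0, 1], continuous h} ->
  measurable_fun (`[z%:~R, z%:~R + 1[ : set R) (per1 h).
Proof.
move=> hc.
have mh : measurable_fun (`[0, 1] : set R) h.
  exact: measurable_realfun.subspace_continuous_measurable_fun.
apply: (@eq_measurable_fun _ _ _ _ _ (h \o (fun x => x - z%:~R))).
  move=> x; rewrite inE /= in_itv /= => hx; exact/esym/per1_int.
apply: (measurable_comp (F := (`[0, 1] : set R))) => //.
- move=> y [x /=]; rewrite !in_itv /= => /andP[h1 h2] <-.
  by apply/andP; split; lra.
- apply: measurable_realfun.measurable_funB => //; exact: measurable_cst.
Qed.

Lemma per1_mfun (R : realType) (h : R -> R) :
  {within `[0, 1], continuous h} -> measurable_fun setT (per1 h).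
Proof.
move=> hc.
pose E (i : nat) : set R := `[(i%:Z)%:~R, (i%:Z)%:~R + 1[ `|`
   `[(- (i%:Z) - 1)%:~R, (- (i%:Z) - 1)%:~R + 1[.
have -> : setT = \bigcup_i E i.
  apply/seteqP; split => // x _.
  have := @frac01 R x; set z := Num.floor x => hx.
  have hz : z%:~R <= x < z%:~R + 1 by apply/andP; split; lra.
  have [z0|z0] := leP 0 z.
    exists `|z|%N => //; left => /=; rewrite in_itv /=.
    by rewrite gez0_abs.
  exists (absz (z + 1)) => //; right => /=; rewrite in_itv /=.
  have -> : (- ((absz (z + 1))%:Z) - 1) = z by lia.
  exact: hz.
apply/measurable_fun_bigcup.
  by move=> i; apply: measurableU; exact: measurable_itv.
move=> i; apply/measurable_funU; try exact: measurable_itv.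
by split; apply: per1_mfun_int.
Qed.

Lemma ae_mono (R : realType) (P Q : R -> Prop) :
  (forall x, P x -> Q x) ->
  {ae (@lebesgue_measure R), forall x, P x} ->
  {ae (@lebesgue_measure R), forall x, Q x}.
Proof. by move=> PQ; apply: negligibleS => x /= nQ Px; exact/nQ/PQ. Qed.

Lemma ae_mono2 (R : realType) (P1 P2 Q : R -> Prop) :
  (forall x, P1 x -> P2 x -> Q x) ->
  {ae (@lebesgue_measure R), forall x, P1 x} ->
  {ae (@lebesgue_measure R), forall x, P2 x} ->
  {ae (@lebesgue_measure R), forall x, Q x}.
Proof.
move=> PQ H1 H2; apply: (negligibleS _ (negligibleU H1 H2)) => x /= nQ.
by apply/not_andP => -[]; move=> /PQ h /h.
Qed.

Theorem theorem4p1 (R : realType) (N : nat) (xs ys : nat -> R) (a : R)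
  (gn : nat -> R -> R) (fstar g : R -> R) :
  (1 < N)%N ->
  xs 0%N = 0 ->
  (forall n, (n < N)%N -> xs n < xs n.+1) ->
  xs N = 1 ->
  `|a| < 1 ->
  (forall n, (1 <= n <= N)%N -> {within `[0, 1], continuous (gn n)}) ->
  let L := fun (n : nat) (t : R) => (t + n%:R - 1) / N%:R in
  let F := fun (n : nat) (t s : R) => a * s + gn n t in
  let w := fun (n : nat) (p : R * R) => (L n p.1, F n p.1 p.2) in
  (forall n, (1 <= n <= N)%N ->
     [/\ L n (xs 0%N) = xs n.-1, L n (xs N) = xs n,
         F n (xs 0%N) (ys 0%N) = ys n.-1 & F n (xs N) (ys N) = ys n]) ->
  {within `[0, 1], continuous fstar} ->
  (forall n, (n <= N)%N -> fstar (xs n) = ys n) ->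
  is_attractor N w (graph01 fstar) ->
  (* definition of g: L_n^{-1}(t) = N t - n + 1 *)
  (forall n, (1 <= n <= N)%N -> forall t, xs n.-1 <= t < xs n ->
     g t = gn n (N%:R * t - n%:R + 1)) ->
  g 1 = gn N 1 ->
  (forall t, 1 < t -> g t = g (t - 1)) ->
  in_space (per1 fstar) /\ solves_fe N a (per1 g) (per1 fstar) /\
  (forall f, in_space f -> solves_fe N a (per1 g) f ->
     {ae (@lebesgue_measure R), forall x, f x = per1 fstar x}).
Proof.
move=> N1 x0 xinc xN a1 gc L F w Hw fc fint Hatt Hg g1 gp.
have N0 : (0 : R) < N%:R by rewrite ltr0n; lia.
have xsv : forall m, (m < N)%N -> xs m = m%:R / N%:R.
  move=> m mN; have [+ _ _ _] := Hw m.+1 ltac:(lia).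
  by rewrite /L x0 /= => <-; congr (_ / _); rewrite -natr1; ring.
have xsv2 : forall m, (m < N)%N -> xs m.+1 = m.+1%:R / N%:R.
  move=> m mN; have [_ + _ _] := Hw m.+1 ltac:(lia).
  by rewrite /L xN /= => <-; congr (_ / _); ring.
have att : forall n t, (1 <= n <= N)%N -> 0 <= t <= 1 ->
    fstar (L n t) = a * fstar t + gn n t.
  move=> n t nN t01; case: Hatt => _ [_ E].
  have : graph01 fstar (w n (t, fstar t)).
    rewrite E; exists n => //; exists (t, fstar t) => //.
  by case => _ /= <-.
have [K HK] : exists K, forall t, 0 <= t <= 1 -> `|fstar t| <= K.
  have /compact_bounded[M [_ mrt]] := continuous_compact fc (@segment_compact R 0 1).
  exists (`|M| + 1) => t t01; apply: (mrt (`|M| + 1)).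
    by rewrite (le_lt_trans (ler_norm M)) // ltrDl.
  by exists t => //=; rewrite in_itv.
have HKp : forall x, `|per1 fstar x| <= K.
  by move=> x; apply: HK; have := @frac01 R x => /andP[h1 h2]; rewrite h1 ltW.
have fe : forall x, per1 fstar x - a * per1 fstar (N%:R * x) = per1 g x.
  move=> x; rewrite /per1.
  have := @frac01 R x; set u := x - _ => /andP[u0 u1].
  have Nu0 : 0 <= N%:R * u by rewrite mulr_ge0 // ler0n.
  have := trunc_itv Nu0; set m := Num.trunc _ => /andP[m1 m2].
  have mN : (m < N)%N.
    by rewrite -(ltr_nat R); apply: (le_lt_trans m1); rewrite gtr_pMr.
  have fl : Num.floor (N%:R * x) = (N%:Z * Num.floor x + m%:Z)%R.
    apply: floor_def; rewrite !intrD !intrM -!pmulrn.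
    have ex : N%:R * x = N%:R * (Num.floor x)%:~R + N%:R * u by rewrite /u; ring.
    by rewrite -natr1 in m2; apply/andP; split; lra.
  rewrite fl !intrD !intrM -!pmulrn.
  have -> : N%:R * x - (N%:R * (Num.floor x)%:~R + m%:R) = N%:R * u - m%:R.
    by rewrite /u; ring.
  set t := N%:R * u - m%:R.
  have t0 : 0 <= t <= 1 by rewrite /t; rewrite -natr1 in m2; apply/andP; split; lra.
  have eu : u = L m.+1 t by rewrite /L /t /u -natr1; field; rewrite gt_eqF.
  have eg : g u = gn m.+1 t.
    rewrite (Hg m.+1 ltac:(lia)) /=; last by rewrite xsv // xsv2 // ler_pdivrMr // ltr_pdivlMr // ![u * _]mulrC m1.
    by congr gn; rewrite /t -natr1; ring.
  by rewrite eg eu att //; ring.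
have sp : in_space (per1 fstar).
  split; first exact: per1_mfun.
  split; first by exists K; apply: aeW.
  split; last by move=> x; rewrite per1_per.
  have mf2 : measurable_fun setT (fun x => per1 fstar x ^+ 2).
    by apply: measurable_realfun.measurable_funX; exact: per1_mfun.
  have := (measurable_bounded_integrable (mu := @lebesgue_measure R) (f := fun x : R => per1 fstar x ^+ 2) (A := `[0, 1]%classic)); apply.
  - exact: measurable_itv.
  - exact: compact_finite_measure (@segment_compact R 0 1).
  - exact: (measurable_funS measurableT).
  - exists (K ^+ 2); split; first exact: num_real.
    move=> M KM x _ /=; rewrite normrX; apply: (le_trans _ (ltW KM)).
    have := HKp x; have := normr_ge0 (per1 fstar x); rewrite !expr2; nra.
split => //; split; first exact: aeW.
move=> f [mf [[M HM] _]] ff.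
pose h x := f x - per1 fstar x.
have hfe : {ae (@lebesgue_measure R), forall x, h x = a * h (N%:R * x)}.
  by apply: ae_mono ff => x Hx; have := fe x; rewrite /h; lra.
have K0 : 0 <= K by apply: le_trans (HKp 0).
have key : forall k, {ae (@lebesgue_measure R), forall x,
    `|h x| <= `|a| ^+ k * (`|M| + K)}.
  elim => [|k IH].
    rewrite expr0 mul1r; apply: ae_mono HM => x Hx; rewrite /h.
    have := HKp x; have := ler_normB (f x) (per1 fstar x); have := ler_norm M; lra.
  apply: (@ae_mono2 R _ _ _ _ hfe (@ae_scl R N%:R N0 _ IH)) => x e1 e2.
  rewrite e1 normrM exprS -mulrA; apply: ler_wpM2l => //.
have key' : forall k, (@lebesgue_measure R).-negligible
    (~` [set x | `|h x| <= `|a| ^+ k * (`|M| + K)]) by move=> k; exact: key k.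
apply: (negligibleS _ (negligible_bigcup key')) => x /= nfx.
have hx0 : 0 < `|h x| by rewrite normr_gt0 /h subr_eq0; apply/eqP.
have C1 : 0 < `|M| + K + 1 by have := normr_ge0 M; lra.
have e0 : 0 < `|h x| / (`|M| + K + 1) by rewrite divr_gt0.
have a1n : `| `|a| | < 1 by rewrite normr_id.
have := cvgr0_norm_lt _ (cvg_expr a1n) _ e0.
case => n0 _ /(_ n0 (leqnn n0)) /= Hn.
exists n0 => // Hle.
rewrite ger0_norm ?exprn_ge0 // ltr_pdivlMr // in Hn.
have := exprn_ge0 n0 (normr_ge0 a); move: Hle Hn.
set p := `|a| ^+ n0; rewrite /=; nra.
Qed.
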